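(* Let $L$ be a totally ordered normal incline and let $A$ be a $3\times 3$ completely positive matrix over $L$. Then $A$ is LU-completely positive or UL-completely positive (or both).
   Context: An incline is a nonempty set $L$ with binary operations $\oplus,\otimes$ such that $(L,\oplus)$ is a semilattice ($\oplus$ associative, commutative, idempotent), $(L,\otimes)$ is a semigroup, $x\otimes(y\oplus z)=(x\otimes y)\oplus(x\otimes z)$ and $x\oplus(x\otimes y)=x$ for all $x,y,z$. The order is $x\le y\iff x\oplus y=y$; $L$ is totally ordered if this order is total, and commutative if $\otimes$ is commutative. An r-ideal is a nonempty $J\subseteq L$ closed under $\oplus$ and under multiplication by arbitrary elements of $L$; a lattice ideal is a nonempty $J\subseteq L$ closed under $\oplus$ and downward closed. A commutative incline $L$ is normal if it has an additive identity $\mathbf{0}$ and a multiplicative identity $\mathbf{1}$ and: every singly generated r-ideal is a lattice ideal (LI-property); for each $x$ there is a unique $c$ with $c\otimes c=x$; $x\otimes y\le(x\otimes x)\oplus(y\otimes y)$ for all $x,y$. Matrix product: $(BC)_{ij}=\bigoplus_k b_{ik}\otimes c_{kj}$; $B^T$ is the transpose. $A$ is completely positive if $A=BB^T$ for some $3\times k$ matrix $B$ over $L$ all of whose entries are of the form $c\otimes c$. $A$ is UL-completely positive if $A=UU^T$ for some upper triangular matrix $U$ over $L$, and LU-completely positive if $A=CC^T$ for some lower triangular matrix $C$ over $L$. *)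

(* Defs.v *)
From mathcomp Require Import all_boot all_algebra.
Set Implicit Arguments. Unset Strict Implicit. Unset Printing Implicit Defensive.

Record incline := Incline {
  icar :> Type;
  iadd : icar -> icar -> icar;
  imul : icar -> icar -> icar;
  iaddA : forall x y z, iadd x (iadd y z) = iadd (iadd x y) z;
  iaddC : forall x y, iadd x y = iadd y x;
  iaddI : forall x, iadd x x = x;
  imulA : forall x y z, imul x (imul y z) = imul (imul x y) z;
  imulDr : forall x y z, imul x (iadd y z) = iadd (imul x y) (imul x z);
  iabsorb : forall x y, iadd x (imul x y) = x;
  inhabited_incline : inhabited icar
}.

Section InclineDefs.
Variable L : incline.

Definition ile (x y : L) : Prop := iadd x y = y.

Definition totally_ordered : Prop := forall x y : L, ile x y \/ ile y x.

Definition commutative_incline : Prop := forall x y : L, imul x y = imul y x.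

Definition r_ideal (J : L -> Prop) : Prop :=
  (exists x, J x) /\
  (forall x y, J x -> J y -> J (iadd x y)) /\
  (forall r x, J x -> J (imul r x) /\ J (imul x r)).

Definition lattice_ideal (J : L -> Prop) : Prop :=
  (exists x, J x) /\
  (forall x y, J x -> J y -> J (iadd x y)) /\
  (forall x y, ile y x -> J x -> J y).

Definition r_ideal_gen (a : L) : L -> Prop :=
  fun x => forall J, r_ideal J -> J a -> J x.

Definition LI_property : Prop := forall a : L, lattice_ideal (r_ideal_gen a).

Definition additive_identity (z : L) : Prop := forall x, iadd x z = x.
Definition multiplicative_identity (o : L) : Prop :=
  forall x, imul o x = x /\ imul x o = x.

Definition normal_incline : Prop :=
  commutative_incline /\
  (exists z : L, additive_identity z) /\
  (exists o : L, multiplicative_identity o) /\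
  LI_property /\
  (forall x : L, exists! c : L, imul c c = x) /\
  (forall x y : L, ile (imul x y) (iadd (imul x x) (imul y y))).

(* Matrix product over L: (BC)_{ij} = (+)_k b_ik (x) c_kj. The empty sum is
   interpreted as the given element z (the additive identity 0). *)
Definition imxmul (z : L) (m n p : nat) (B : 'M[L]_(m, n)) (C : 'M[L]_(n, p))
  : 'M[L]_(m, p) :=
  \matrix_(i, j) \big[@iadd L / z]_(k < n) imul (B i k) (C k j).

Definition is_square (x : L) : Prop := exists c : L, x = imul c c.

Definition completely_positive (z : L) (A : 'M[L]_3) : Prop :=
  exists (k : nat) (B : 'M[L]_(3, k)),
    (forall i j, is_square (B i j)) /\ A = imxmul z B B^T.

Definition upper_triangular (z : L) (n : nat) (U : 'M[L]_n) : Prop :=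
  forall i j : 'I_n, (j < i)%N -> U i j = z.

Definition lower_triangular (z : L) (n : nat) (C : 'M[L]_n) : Prop :=
  forall i j : 'I_n, (i < j)%N -> C i j = z.

Definition UL_completely_positive (z : L) (A : 'M[L]_3) : Prop :=
  exists U : 'M[L]_3, upper_triangular z U /\ A = imxmul z U U^T.

Definition LU_completely_positive (z : L) (A : 'M[L]_3) : Prop :=
  exists C : 'M[L]_3, lower_triangular z C /\ A = imxmul z C C^T.

End InclineDefs.

(* Main.v *)
Require Import Defs.
From mathcomp Require Import all_boot all_algebra.

Lemma le_refl (L : incline) (x : L) : ile x x.
Proof. exact: iaddI. Qed.

Lemma le_trans' (L : incline) (x y w : L) : ile x y -> ile y w -> ile x w.
Proof. rewrite /ile => h1 h2. by rewrite -h2 iaddA h1. Qed.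

Lemma le_anti (L : incline) (x y : L) : ile x y -> ile y x -> x = y.
Proof. rewrite /ile => h1 h2. by rewrite -h2 iaddC h1. Qed.

Lemma z_le (L : incline) (z x : L) : additive_identity z -> ile z x.
Proof. move=> hz; by rewrite /ile iaddC hz. Qed.

Lemma le_mulr (L : incline) (x y : L) : ile (imul x y) x.
Proof. by rewrite /ile iaddC iabsorb. Qed.

Lemma mul_mono (L : incline) (w x y : L) : ile x y -> ile (imul w x) (imul w y).
Proof. rewrite /ile => h. by rewrite -imulDr h. Qed.

Lemma mul_monol (L : incline) (w x y : L) : commutative_incline L ->
  ile x y -> ile (imul x w) (imul y w).
Proof. move=> c h. rewrite (c x) (c y). exact: mul_mono. Qed.

Lemma mul_mono2 (L : incline) (a b c d : L) : commutative_incline L ->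
  ile a b -> ile c d -> ile (imul a c) (imul b d).
Proof.
move=> cm h1 h2. apply: (le_trans' _ _ (imul a d)); first exact: mul_mono.
exact: mul_monol.
Qed.

Lemma le_add (L : incline) (x y b : L) : ile x b -> ile y b -> ile (iadd x y) b.
Proof. rewrite /ile => h1 h2. by rewrite -iaddA h2 h1. Qed.

Lemma add_r (L : incline) (x y : L) : ile x y -> iadd x y = y.
Proof. by []. Qed.

Lemma add_l (L : incline) (x y : L) : ile y x -> iadd x y = x.
Proof. by rewrite iaddC. Qed.

Lemma mulz (L : incline) (z x : L) : additive_identity z -> imul z x = z.
Proof. move=> hz. apply: le_anti; first exact: le_mulr. exact: z_le. Qed.

Lemma mulz' (L : incline) (z x : L) : commutative_incline L ->
  additive_identity z -> imul x z = z.
Proof. move=> c hz. rewrite c. exact: mulz. Qed.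

Lemma top (L : incline) (o x : L) : multiplicative_identity o -> ile x o.
Proof. move=> ho. rewrite /ile iaddC. have [h _] := ho x.
by rewrite -{1}h iabsorb. Qed.

Lemma sqrt_mono (L : incline) (c d : L) : commutative_incline L ->
  totally_ordered L -> (forall x : L, exists! r : L, imul r r = x) ->
  ile (imul c c) (imul d d) -> ile c d.
Proof.
move=> cm tot sq h. case: (tot c d) => // h2.
have e : imul c c = imul d d.
  apply: le_anti => //. exact: mul_mono2.
have [r [_ u]] := sq (imul d d).
have -> : c = r by apply/esym/u.
have -> : d = r by apply/esym/u.
exact: le_refl.
Qed.

Lemma divide (L : incline) (o a x : L) : commutative_incline L ->
  multiplicative_identity o -> LI_property L ->
  ile x a -> exists r, x = imul a r.
Proof.
move=> cm ho li h.
have [_ [_ dc]] := li a.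
have ax : r_ideal_gen a a by move=> J _.
apply: ((dc a x h ax) (fun u => exists r, u = imul a r)).
- split; first by exists a; exists o; have [_ ->] := ho a.
  split.
  + move=> u v [r1 ->] [r2 ->]. exists (iadd r1 r2). by rewrite imulDr.
  + move=> r u [r1 ->]. split.
    * exists (imul r1 r). by rewrite cm -imulA (cm r1).
    * exists (imul r1 r). by rewrite imulA.
- exists o. by have [_ ->] := ho a.
Qed.

Lemma le_big (L : incline) (z : L) (I : eqType) (s : seq I) (F : I -> L) x :
  additive_identity z -> x \in s -> ile (F x) (\big[@iadd L/z]_(i <- s) F i).
Proof.
move=> hz. elim: s => //= a s IH; rewrite in_cons; case/orP => [/eqP ->|hin].
- rewrite big_cons /ile iaddA iaddI //.
- rewrite big_cons. apply: (le_trans' _ _ _ _ (IH hin)).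
  by rewrite /ile iaddC -iaddA iaddI.
Qed.

Lemma big_le (L : incline) (z : L) (I : Type) (s : seq I) (F : I -> L) b :
  additive_identity z -> (forall i, ile (F i) b) -> ile (\big[@iadd L/z]_(i <- s) F i) b.
Proof.
move=> hz h. elim: s => [|a s IH]; first by rewrite big_nil; exact: z_le.
rewrite big_cons. exact: le_add.
Qed.

Lemma swap4 (L : incline) (a b c d : L) : commutative_incline L ->
  imul (imul a b) (imul c d) = imul (imul a c) (imul b d).
Proof. move=> cm. by rewrite -!imulA (imulA b) (cm b c) -imulA. Qed.

Lemma addzl (L : incline) (z x : L) : additive_identity z -> iadd z x = x.
Proof. move=> hz. by rewrite iaddC hz. Qed.

Lemma add3 (L : incline) (S X Y : L) : ile X S -> ile Y S -> iadd S (iadd X Y) = S.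
Proof. move=> h1 h2. rewrite iaddC. exact: le_add. Qed.

Lemma key (L : incline) (a b t u v : L) : commutative_incline L -> ile (imul t u) v ->
  iadd (imul (imul a t) (imul b u)) (imul a (imul b v)) = imul (imul a b) v.
Proof.
move=> cm h. rewrite swap4 // (imulA a b v).
exact: (mul_mono _ (imul a b) _ _ h).
Qed.

Lemma sq_absorb (L : incline) (a t : L) : commutative_incline L ->
  iadd (imul (imul a t) (imul a t)) (imul a a) = imul a a.
Proof. move=> cm. exact: (mul_mono2 _ _ _ _ _ cm (le_mulr _ _ _) (le_mulr _ _ _)). Qed.

Theorem mainTheorem10 (L : incline) (z : L) (A : 'M[L]_3) :
  totally_ordered L ->
  normal_incline L ->
  additive_identity z ->
  completely_positive z A ->
  LU_completely_positive z A \/ UL_completely_positive z A.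
Proof.
move=> tot [cm [_ [[o ho] [li [sq _]]]]] hz [k [B [_ HA]]].
have Aij : forall i j, A i j = \big[@iadd L/z]_(k0 < k) imul (B i k0) (B j k0).
  move=> i j. rewrite HA /imxmul mxE. apply: eq_bigr => k0 _. by rewrite mxE.
have Asym : forall i j, A i j = A j i.
  move=> i j. rewrite !Aij. apply: eq_bigr => k0 _. exact: cm.
have Bb : forall i k0, ile (imul (B i k0) (B i k0)) (A i i).
  move=> i k0. rewrite Aij. apply: le_big => //.
have Ab : forall i j si sj, imul si si = A i i -> imul sj sj = A j j ->
    ile (A i j) (imul si sj).
  move=> i j si sj hi hj. rewrite Aij. apply: big_le => // k0.
  apply: mul_mono2 => //; apply: sqrt_mono => //; rewrite ?hi ?hj; exact: Bb.
pose i0 : 'I_3 := @Ordinal 3 0 isT.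
pose i1 : 'I_3 := @Ordinal 3 1 isT.
pose i2 : 'I_3 := @Ordinal 3 2 isT.
have cases3 : forall i : 'I_3, i = i0 \/ i = i1 \/ i = i2.
  move=> [[|[|[|m]]] Hm]; [left|right;left|right;right|by []]; exact: val_inj.
have [s0 [hs0 _]] := sq (A i0 i0).
have [s1 [hs1 _]] := sq (A i1 i1).
have [s2 [hs2 _]] := sq (A i2 i2).
have [t01 ht01] := divide _ o _ _ cm ho li (Ab _ _ _ _ hs0 hs1).
have [t02 ht02] := divide _ o _ _ cm ho li (Ab _ _ _ _ hs0 hs2).
have [t12 ht12] := divide _ o _ _ cm ho li (Ab _ _ _ _ hs1 hs2).
have lm : forall a b : L, ile (imul a b) a by move=> a b; exact: le_mulr.
have lm2 : forall a b c d : L, ile a b -> ile c d -> ile (imul a c) (imul b d).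
  by move=> a b c d; exact: (mul_mono2 _ _ _ _ _ cm).
have mz : forall x : L, imul z x = z by move=> x; exact: mulz.
have mz' : forall x : L, imul x z = z by move=> x; exact: mulz'.
have az : forall x : L, iadd z x = x by move=> x; exact: addzl.
case: (tot t01 t12) => ht.
- left.
  exists (\matrix_(i < 3, j < 3) match (i : nat), (j : nat) with
    | 0, 0 => s0 | 1, 0 => imul s1 t01 | 1, 1 => s1
    | 2, 0 => imul s2 t02 | 2, 1 => imul s2 t12 | 2, 2 => s2 | _, _ => z end)%R.
  split.
    move=> i j; rewrite mxE.
    by case: (cases3 i) => [->|[->|->]]; case: (cases3 j) => [->|[->|->]].
  apply/matrixP => i j; rewrite /imxmul mxE !big_ord_recl big_ord0 !mxE /=.
  case: (cases3 i) => [->|[->|->]]; case: (cases3 j) => [->|[->|->]] /=;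
   rewrite ?mz ?mz' ?hz ?az.
  - by rewrite hs0.
  - by rewrite ht01 imulA.
  - by rewrite ht02 imulA.
  - by rewrite Asym ht01 (cm _ s0) imulA.
  - by rewrite -hs1 sq_absorb.
  - rewrite ht12 key //; exact: (le_trans' _ _ _ _ (le_mulr _ _ _) ht).
  - by rewrite Asym ht02 (cm _ s0) imulA.
  - rewrite Asym ht12 (cm (imul s2 t02)) (cm (imul s2 t12) s1) key //; exact: (le_trans' _ _ _ _ (le_mulr _ _ _) ht).
  - by rewrite -hs2 !sq_absorb.
- right.
  exists (\matrix_(i < 3, j < 3) match (i : nat), (j : nat) with
    | 0, 0 => s0 | 0, 1 => imul s0 t01 | 0, 2 => imul s0 t02
    | 1, 1 => s1 | 1, 2 => imul s1 t12 | 2, 2 => s2 | _, _ => z end)%R.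
  split.
    move=> i j; rewrite mxE.
    by case: (cases3 i) => [->|[->|->]]; case: (cases3 j) => [->|[->|->]].
  apply/matrixP => i j; rewrite /imxmul mxE !big_ord_recl big_ord0 !mxE /=.
  case: (cases3 i) => [->|[->|->]]; case: (cases3 j) => [->|[->|->]] /=;
   rewrite ?mz ?mz' ?hz ?az.
  - rewrite -hs0 add3 //; apply: lm2; apply: lm.
  - rewrite iaddC -(imulA s0 t01 s1) (cm t01 s1) ht01 key //; rewrite cm; exact: (le_trans' _ _ _ _ (le_mulr _ _ _) ht).
  - by rewrite ht02 -!imulA (cm t02 s2).
  - rewrite Asym (cm s1) (cm (imul s1 t12)) iaddC -(imulA s0 t01 s1) (cm t01 s1) ht01 key //; rewrite cm; exact: (le_trans' _ _ _ _ (le_mulr _ _ _) ht).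
  - by rewrite -hs1 iaddC sq_absorb.
  - by rewrite ht12 -!imulA (cm t12 s2).
  - by rewrite Asym ht02 imulA (cm s2 s0).
  - by rewrite Asym ht12 imulA (cm s2 s1).
  - by rewrite hs2.
Qed.
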